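(* Let $\epsilon>0$, $T\in\mathbb{N}$, and $B\ge T$, and define $k=5\lfloor B/T\rfloor+5$. Then there exists an instance of the UVP problem (with total budget $B$, maximum per-configuration budget $T$, smoothness parameter $\epsilon$) satisfying the concavity assumption, with $k$ clusters each of radius $r_k>0$, such that no algorithm can achieve an approximation factor exceeding $(1-\epsilon r_k)$, where $r_k$ is the optimal clustering radius for $k$ clusters.
   Context: UVP problem: $A:\mathbb{R}^d\times[T]\to[0,1]$ is unknown ($[T]=\{1,\dots,T\}$); a finite $\mathcal{X}\subset\mathbb{R}^d$ is known; goal $\max_{b_1,\dots,b_n}\max_iA(\mathbf{x}_i,b_i)$ subject to $\sum_ib_i\le B$; obtaining $A(\mathbf{x},b)$ requires evaluating $A(\mathbf{x},1),\dots,A(\mathbf{x},b)$ in sequence, costing $b$ units. Instances satisfy Assumption 1 (monotonicity): $b_1\le b_2\Rightarrow A(\mathbf{x},b_1)\le A(\mathbf{x},b_2)$, and Assumption 2 (smoothness): for all $\mathbf{x}_i,\mathbf{x}_j\in\mathcal{X}$, $\min_{b\in[T]}A(\mathbf{x}_i,b)/A(\mathbf{x}_j,b)\ge1-\epsilon\|\mathbf{x}_i-\mathbf{x}_j\|_2$ (ratio $=1$ if both are $0$, $+\infty$ if only the denominator is $0$). Concavity assumption: for all $\mathbf{x}\in\mathcal{X}$ and $b\in\{2,\dots,T-1\}$, $A(\mathbf{x},b+1)-A(\mathbf{x},b)\le A(\mathbf{x},b)-A(\mathbf{x},b-1)$. The optimal clustering radius for $m$ clusters is $\min_{\mathcal{C}\subseteq\mathcal{X},|\mathcal{C}|=m}\max_{\mathbf{x}\in\mathcal{X}}\min_{\mathbf{c}\in\mathcal{C}}\|\mathbf{x}-\mathbf{c}\|_2$.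 An algorithm (possibly randomized) adaptively evaluates values within budget $B$ and outputs $\mathbf{x}^{Alg}$; it achieves approximation factor $\alpha$ on an instance if $\mathbb{E}[A(\mathbf{x}^{Alg},T)]\ge\alpha\max_{\mathbf{x}\in\mathcal{X}}A(\mathbf{x},T)$. *)

(* Defs.v *)
From HB Require Import structures.
From mathcomp Require Import all_boot all_order all_algebra.
From mathcomp Require Import all_classical all_reals all_analysis.
Set Implicit Arguments. Unset Strict Implicit. Unset Printing Implicit Defensive.
Import Order.TTheory GRing.Theory Num.Theory.
Local Open Scope ring_scope.
Local Open Scope classical_set_scope.

Section UVP.
Variable R : realType.

Definition l2norm (d : nat) (v : 'rV[R]_d) : R :=
  Num.sqrt (\sum_(i < d) (v ord0 i) ^+ 2).

Definition dist2 (d : nat) (u v : 'rV[R]_d) : R := l2norm (u - v).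

(* The ratio of Assumption 2: a / c, with 0/0 = 1 and a/0 = +oo for a <> 0. *)
Definition uvp_ratio (a c : R) : \bar R :=
  if c == 0 then (if a == 0 then 1%E else +oo%E) else (a / c)%:E.

(* The known finite set X = { x i | i < n } (x injective), A : R^d x [T] -> [0,1]
   given as a function on R^d x nat whose values on b in [T] = {1..T} matter. *)

Definition range01 (d T : nat) (A : 'rV[R]_d -> nat -> R) : Prop :=
  forall v b, (1 <= b <= T)%N -> 0 <= A v b <= 1.

Definition monotone_assump (d n T : nat) (x : 'I_n -> 'rV[R]_d)
    (A : 'rV[R]_d -> nat -> R) : Prop :=
  forall i b1 b2, (1 <= b1)%N -> (b1 <= b2)%N -> (b2 <= T)%N ->
    A (x i) b1 <= A (x i) b2.

Definition smooth_assump (d n T : nat) (eps : R) (x : 'I_n -> 'rV[R]_d)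
    (A : 'rV[R]_d -> nat -> R) : Prop :=
  forall i j b, (1 <= b <= T)%N ->
    ((1 - eps * dist2 (x i) (x j))%:E <= uvp_ratio (A (x i) b) (A (x j) b))%E.

Definition concave_assump (d n T : nat) (x : 'I_n -> 'rV[R]_d)
    (A : 'rV[R]_d -> nat -> R) : Prop :=
  forall i b, (2 <= b)%N -> (b <= T.-1)%N ->
    A (x i) b.+1 - A (x i) b <= A (x i) b - A (x i) b.-1.

Definition uvp_instance (d n T : nat) (eps : R) (x : 'I_n -> 'rV[R]_d)
    (A : 'rV[R]_d -> nat -> R) : Prop :=
  range01 T A /\ monotone_assump T x A /\ smooth_assump T eps x A.

(* rho = max_{i} min_{c in C} ||x_i - x_c||_2  (C nonempty). *)
Definition cover_radius (d n : nat) (x : 'I_n -> 'rV[R]_d) (C : {set 'I_n})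
    (rho : R) : Prop :=
  (forall i, exists2 c, c \in C & dist2 (x i) (x c) <= rho) /\
  (exists i, forall c, c \in C -> rho <= dist2 (x i) (x c)).

(* r = min_{C subset X, |C| = m} max_{x in X} min_{c in C} ||x - c||_2. *)
Definition opt_cluster_radius (d n : nat) (x : 'I_n -> 'rV[R]_d) (m : nat)
    (r : R) : Prop :=
  (exists C : {set 'I_n}, #|C| = m /\ cover_radius x C r) /\
  (forall (C : {set 'I_n}) rho, #|C| = m -> cover_radius x C rho -> r <= rho).

(* Deterministic adaptive algorithm: given the history of observations
   (configuration index, observed value), either advance a configuration by
   one level (Some i) or stop (None); when finished, output a configuration. *)
Record strategy (n : nat) := Strategy {
  st_query : seq ('I_n * R) -> option 'I_n;
  st_output : seq ('I_n * R) -> 'I_n }.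

Definition level (n : nat) (h : seq ('I_n * R)) (i : 'I_n) : nat :=
  count (fun p => p.1 == i) h.

(* Execution: each step advances one configuration from level b to b+1,
   observing A(x_i, b+1) at unit cost; total cost sum_i b_i <= B, b_i <= T. *)
Fixpoint run (d n T : nat) (x : 'I_n -> 'rV[R]_d) (A : 'rV[R]_d -> nat -> R)
    (s : strategy n) (fuel : nat) (h : seq ('I_n * R)) : seq ('I_n * R) :=
  match fuel with
  | 0 => h
  | f.+1 =>
    match st_query s h with
    | None => h
    | Some i =>
      let b := level h i in
      if (b < T)%N then run T x A s f (rcons h (i, A (x i) b.+1)) else h
    end
  end.

Definition alg_output (d n T B : nat) (x : 'I_n -> 'rV[R]_d)
    (A : 'rV[R]_d -> nat -> R) (s : strategy n) : 'I_n :=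
  st_output s (run T x A s B [::]).

(* Expected value E[A(x^Alg, T)] of a randomized algorithm, i.e. a random
   choice (seed omega ~ P) of a deterministic adaptive strategy. *)
Definition expected_value (dd : measure_display) (Omega : measurableType dd)
    (P : probability Omega R) (d n T B : nat) (x : 'I_n -> 'rV[R]_d)
    (A : 'rV[R]_d -> nat -> R) (alg : Omega -> strategy n) : R :=
  \sum_(j < n) fine (P [set w | alg_output T B x A (alg w) = j]) * A (x j) T.

Definition opt_value (d n T : nat) (x : 'I_n -> 'rV[R]_d)
    (A : 'rV[R]_d -> nat -> R) : R :=
  \big[Num.max/0]_(j < n) A (x j) T.

End UVP.

(* Main.v *)
Require Import Defs.
From HB Require Import structures.
From mathcomp Require Import all_boot all_order all_algebra.
From mathcomp Require Import all_classical all_reals all_analysis.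
From mathcomp Require Import measurable_realfun.
From mathcomp Require Import zify ring lra.
Import Order.TTheory GRing.Theory Num.Theory.
Local Open Scope ring_scope.
Local Open Scope classical_set_scope.
Section Run.
Variables (R : realType) (d n T : nat) (x : 'I_n -> 'rV[R]_d).

Lemma level_cat (h t : seq ('I_n * R)) i : level (h ++ t) i = (level h i + level t i)%N.
Proof. by rewrite /level count_cat. Qed.

Lemma run_prefix A s f h : exists t, run T x A s f h = h ++ t.
Proof.
elim: f h => [|f IH] h /=; first by exists [::]; rewrite cats0.
case: (st_query s h) => [i|]; last by exists [::]; rewrite cats0.
case: ifP => _; last by exists [::]; rewrite cats0.
have [t ->] := IH (rcons h (i, A (x i) (level h i).+1)).
by exists ((i, A (x i) (level h i).+1) :: t); rewrite cat_rcons.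
Qed.

Lemma run_size A s f h : (size (run T x A s f h) <= size h + f)%N.
Proof.
elim: f h => [|f IH] h /=; first by rewrite addn0.
case: (st_query s h) => [i|]; last by rewrite leq_addr.
case: ifP => _; last by rewrite leq_addr.
by apply: leq_trans (IH _) _; rewrite size_rcons addSnnS.
Qed.

Lemma run_agree A A' s j :
  (forall i b, (i != j) || (b < T)%N -> A (x i) b = A' (x i) b) ->
  forall f h, (level (run T x A s f h) j < T)%N ->
  run T x A s f h = run T x A' s f h.
Proof.
move=> Hag; elim=> [|f IH] h //=.
case: (st_query s h) => [i|] //.
case: ifP => // Hb Hl.
have E : A (x i) (level h i).+1 = A' (x i) (level h i).+1.
  apply: Hag; case: (eqVneq i j) => [eij|] //=; subst i.
  have [t Ht] := run_prefix A s f (rcons h (j, A (x j) (level h j).+1)).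
  move: Hl; rewrite Ht level_cat -cats1 level_cat /level /= eqxx.
  move=> H; apply: leq_ltn_trans H; lia.
rewrite E in Hl *; exact: IH.
Qed.

Lemma sum_level (h : seq ('I_n * R)) : (\sum_(i < n) level h i)%N = size h.
Proof.
elim: h => [|p h IH]; first by rewrite big1.
have Hl : forall i, level (p :: h) i = ((p.1 == i) + level h i)%N by [].
rewrite (eq_bigr (fun i => ((p.1 == i) + level h i)%N)) //.
rewrite big_split /= IH (bigD1 p.1) //= eqxx big1 ?addn0 ?add1n // => i.
by rewrite eq_sym => /negbTE ->.
Qed.

Lemma count_full (h : seq ('I_n * R)) :
  (T * \sum_(i < n) (T <= level h i : nat) <= size h)%N.
Proof.
rewrite -(sum_level h) big_distrr /=; apply: leq_sum => i _.
by have [H|H] := leqP T (level h i); rewrite ?muln1 ?muln0.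
Qed.

End Run.
Definition row1 {R : realType} (a : R) : 'rV[R]_1 := \row_(j < 1) a.
Definition posn {R : realType} (ie r : R) (m : nat) : R :=
  if m == 0%N then 0 else if m == 1%N then r else m%:R * ie.
Definition xx {R : realType} (n : nat) (ie r : R) (i : 'I_n) : 'rV[R]_1 :=
  row1 (posn ie r i).
Definition f1 {R : realType} (T b : nat) : R := b%:R / T%:R.
Definition f0 {R : realType} (T b : nat) : R := (minn b T.-1)%:R / T%:R.
Definition Aj {R : realType} {d n : nat} (T : nat) (x : 'I_n -> 'rV[R]_d) (j : 'I_n)
  (v : 'rV[R]_d) (b : nat) : R := if v == x j then f1 T b else f0 T b.
Definition Abase {R : realType} {d : nat} (T : nat) (v : 'rV[R]_d) (b : nat) : R := f0 T b.

Section Geo.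
Variable R : realType.

Lemma dist_row1 (a b : R) : dist2 (row1 a) (row1 b) = `|a - b|.
Proof. by rewrite /dist2 /l2norm big_ord1 !mxE sqrtr_sqr. Qed.

Lemma posn_far (ie r : R) (i j : nat) : 0 < ie -> 0 <= r <= ie ->
  (2 <= i)%N -> i != j -> ie <= `|posn ie r i - posn ie r j|.
Proof.
move=> ie0 /andP[r0 rie] i2 ij.
have -> : posn ie r i = i%:R * ie by rewrite /posn; case: i i2 ij => [|[|i]].
have i2' : 2%:R <= i%:R :> R by rewrite ler_nat.
rewrite ler_normr; apply/orP.
rewrite /posn; case: eqP => [j0|/eqP j0].
  by left; nra.
case: eqP => [j1|/eqP j1].
  by left; nra.
have [ltij|ltji] := ltnP i j.
  have : (i.+1)%:R <= j%:R :> R by rewrite ler_nat.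
  rewrite -addn1 natrD => H; right; nra.
have : (j.+1)%:R <= i%:R :> R.
  by rewrite ler_nat ltn_neqAle ltji andbT eq_sym.
rewrite -addn1 natrD => H; left; nra.
Qed.

Lemma posn_r (ie r : R) (i j : nat) : 0 < ie -> 0 <= r <= ie ->
  i != j -> r <= `|posn ie r i - posn ie r j|.
Proof.
move=> ie0 Hr ij; have /andP[r0 rie] := Hr.
case: (leqP 2 i) => i2.
  exact: (le_trans rie (@posn_far ie r i j ie0 Hr i2 ij)).
case: (leqP 2 j) => j2.
  rewrite distrC; apply: (le_trans rie (@posn_far ie r j i ie0 Hr j2 _)).
  by rewrite eq_sym.
rewrite /posn; move: i j ij i2 j2 => [|[|i]] [|[|j]] //= _ _ _.
- by rewrite sub0r normrN ger0_norm.
- by rewrite subr0 ger0_norm.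
Qed.

End Geo.
Section Inst.
Variables (R : realType) (eps : R) (T n : nat).
Hypotheses (eps0 : 0 < eps) (T0 : (0 < T)%N).
Let ie : R := eps^-1.
Let r : R := ie / (2 * T%:R).
Let x : 'I_n -> 'rV[R]_1 := xx n ie r.

Lemma ie_pos : 0 < ie. Proof. by rewrite invr_gt0. Qed.
Lemma T_pos : 0 < T%:R :> R. Proof. by rewrite ltr0n. Qed.
Lemma r_pos : 0 < r.
Proof. by rewrite /r divr_gt0 ?ie_pos // mulr_gt0 ?T_pos. Qed.
Lemma r_le : 0 <= r <= ie.
Proof.
rewrite ltW ?r_pos //= /r ler_pdivrMr ?mulr_gt0 ?T_pos //.
have : 1 <= T%:R :> R by rewrite ler1n.
have := ie_pos; nra.
Qed.
Lemma eps_r : eps * r = (2 * T%:R)^-1.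
Proof.
rewrite /r /ie mulrA mulrV ?mul1r //; rewrite unitfE; exact: lt0r_neq0.
Qed.

Lemma dist_x i j : dist2 (x i) (x j) = `|posn ie r i - posn ie r j|.
Proof. by rewrite /x /xx dist_row1. Qed.

Lemma x_inj : injective x.
Proof.
move=> i j E; apply/eqP; apply/negPn/negP => ij.
have : val i != val j by [].
move/(@posn_r R ie r _ _ ie_pos r_le); rewrite -dist_x E /dist2 subrr /l2norm.
rewrite big1 ?sqrtr0 => [|k _]; last by rewrite mxE expr0n.
by rewrite leNgt r_pos.
Qed.

Lemma ratio_ge0 (a c : R) : 0 <= a -> 0 <= c -> (0 <= uvp_ratio a c)%E.
Proof.
move=> a0 c0; rewrite /uvp_ratio; case: ifP => _; first by case: ifP.
by rewrite lee_fin divr_ge0.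
Qed.

Lemma ratio_eq (a : R) : uvp_ratio a a = 1%E.
Proof.
rewrite /uvp_ratio; case: (boolP (a == 0)) => a0; first by [].
by rewrite divff.
Qed.

Lemma frac_range m : (m <= T)%N -> 0 <= (m%:R / T%:R : R) <= 1.
Proof.
move=> mT; rewrite divr_ge0 //= ler_pdivrMr ?T_pos // mul1r ler_nat //.
Qed.

Lemma frac_mono m1 m2 : (m1 <= m2)%N -> m1%:R / T%:R <= m2%:R / T%:R :> R.
Proof. by move=> H; rewrite ler_pM2r ?invr_gt0 ?T_pos // ler_nat. Qed.

Lemma frac_conc m1 m2 m3 : (m1 + m3 <= m2 + m2)%N ->
  m1%:R / T%:R - m2%:R / T%:R <= m2%:R / T%:R - m3%:R / T%:R :> R.
Proof.
move=> H; have : (m1 + m3)%:R <= (m2 + m2)%:R :> R by rewrite ler_nat.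
rewrite !natrD => H'.
have c0 : 0 < T%:R^-1 :> R by rewrite invr_gt0 T_pos.
nra.
Qed.

Lemma f1_range b : (b <= T)%N -> 0 <= (f1 T b : R) <= 1.
Proof. exact: frac_range. Qed.
Lemma f0_range b : (b <= T)%N -> 0 <= (f0 T b : R) <= 1.
Proof. by move=> bT; apply: frac_range; lia. Qed.

Lemma f1_mono b1 b2 : (b1 <= b2)%N -> f1 T b1 <= f1 T b2 :> R.
Proof. exact: frac_mono. Qed.
Lemma f0_mono b1 b2 : (b1 <= b2)%N -> f0 T b1 <= f0 T b2 :> R.
Proof. move=> H; apply: frac_mono; lia. Qed.

Lemma f1_conc b : (2 <= b)%N -> (b <= T.-1)%N ->
  f1 T b.+1 - f1 T b <= f1 T b - f1 T b.-1 :> R.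
Proof. move=> b2 bT; apply: frac_conc; lia. Qed.
Lemma f0_conc b : (2 <= b)%N -> (b <= T.-1)%N ->
  f0 T b.+1 - f0 T b <= f0 T b - f0 T b.-1 :> R.
Proof. move=> b2 bT; apply: frac_conc; lia. Qed.

Lemma f01 b : (b < T)%N -> f0 T b = f1 T b :> R.
Proof. by move=> bT; rewrite /f0 /f1; congr (_%:R / _); lia. Qed.

Lemma Aj_x (j i : 'I_n) b : Aj T x j (x i) b = if i == j then f1 T b else f0 T b.
Proof. by rewrite /Aj (inj_eq x_inj). Qed.

Lemma Aj_valid (j : 'I_n) : (2 <= j)%N ->
  uvp_instance T eps x (Aj T x j) /\ concave_assump T x (Aj T x j).
Proof.
move=> j2; split; [split; [|split]|].
- move=> v b /andP[b1 bT]; rewrite /Aj; case: ifP => _.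
  exact: f1_range. exact: f0_range.
- move=> i b1 b2 _ b12 _; rewrite !Aj_x; case: ifP => _.
  exact: f1_mono. exact: f0_mono.
- move=> i i' b /andP[b1 bT]; rewrite !Aj_x.
  have Hd : 0 <= dist2 (x i) (x i') by rewrite dist_x.
  have Hv : forall i0 : 'I_n, 0 <= (if i0 == j then f1 T b else f0 T b) :> R.
    by move=> i0; case: ifP => _; [case/andP: (f1_range _ bT) | case/andP: (f0_range _ bT)].
  case: (boolP ((i == j) == (i' == j))) => [/eqP E|E].
    rewrite E ratio_eq lee_fin; have := Hd; have := eps0; nra.
  apply: le_trans _ (ratio_ge0 _ _ (Hv i) (Hv i')); rewrite lee_fin subr_le0.
  have [k k2 kk] : exists2 k : 'I_n, (2 <= k)%N & ((k == i) && (i' != k)) || ((k == i') && (i != k)).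
    move: E; case: (eqVneq i j) => [->|ij]; case: (eqVneq i' j) => [->|i'j] //= _.
      by exists j => //; rewrite !eqxx /= i'j.
    by exists j => //; rewrite !eqxx /= ij orbT.
  have Hie : ie <= dist2 (x i) (x i').
    rewrite dist_x; case/orP: kk => /andP[/eqP ki ik].
      subst k; apply: posn_far => //; [exact: ie_pos | exact: r_le | by rewrite eq_sym].
    subst k; rewrite distrC; apply: posn_far => //; [exact: ie_pos | exact: r_le | by rewrite eq_sym].
  have : eps * ie = 1 by rewrite /ie mulfV // lt0r_neq0.
  have := eps0; nra.
- move=> i b b2 bT; rewrite !Aj_x; case: ifP => _.
  exact: f1_conc. exact: f0_conc.
Qed.

End Inst.
Lemma sum_prob_le (R : realType) (dd : measure_display) (Omega : measurableType dd)
  (P : probability Omega R) (I : Type) (s : seq I) (E : I -> set Omega) (M : R) :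
  (forall j, measurable (E j)) -> 0 <= M ->
  (forall w, \sum_(j <- s) (\1_(E j) w : R) <= M) ->
  \sum_(j <- s) fine (P (E j)) <= M.
Proof.
move=> mE M0 HM.
have H1 : ((\sum_(j <- s) fine (P (E j)))%:E =
   \sum_(j <- s) \int[P]_(w in setT) (\1_(E j) w)%:E)%E.
  rewrite -sumEFin; apply: eq_bigr => j _.
  by rewrite integral_indic // setIT fineK // fin_num_measure.
have mi : forall j, measurable_fun [set: Omega] (fun w => (\1_(E j) w : R)%:E : \bar R).
  by move=> j; apply/(measurable_EFinP _ (\1_(E j) : Omega -> R)); apply: measurable_indic.
rewrite -lee_fin H1 -ge0_integral_sum //.
apply: (@le_trans _ _ (\int[P]_(w in setT) (cst M%:E w))%E).
  apply: ge0_le_integral => //.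
  - by move=> w _; apply: sume_ge0 => j _; rewrite lee_fin indicE; case: (w \in E j).
  - by apply: emeasurable_sum => j; apply: mi.
  - by move=> w _ /=; rewrite sumEFin lee_fin.
rewrite integral_cst //.
have HP := probability_setT P.
suff -> : (M%:E * P setT = M%:E)%E by [].
by rewrite -[RHS]mule1; congr (_ * _)%E; exact: HP.
Qed.

Lemma count2 m : (\sum_(j < m.+2) (2 <= j : nat))%N = m.
Proof.
rewrite !big_ord_recl /= (eq_bigr (fun=> 1%N)) ?sum1_card ?card_ord //.
Qed.

Lemma sum_eq1 n (o : 'I_n) : (\sum_(j < n) (o == j : nat))%N = 1%N.
Proof.
rewrite (bigD1 o) //= eqxx big1 // => i; rewrite eq_sym => /negbTE ->.
by [].
Qed.

Theorem corollary2 (R : realType) (eps : R) (T B : nat) :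
  0 < eps -> (0 < T)%N -> (T <= B)%N ->
  let k := (5 * (B %/ T) + 5)%N in
  exists (d n : nat) (x : 'I_n -> 'rV[R]_d) (r : R),
    injective x /\ opt_cluster_radius x k r /\ 0 < r /\
    forall (dd : measure_display) (Omega : measurableType dd)
           (P : probability Omega R) (alg : Omega -> strategy R n),
      (forall (A : 'rV[R]_d -> nat -> R) (j : 'I_n),
          uvp_instance T eps x A -> concave_assump T x A ->
          measurable [set w | alg_output T B x A (alg w) = j]) ->
      forall alpha : R, 1 - eps * r < alpha ->
        exists A : 'rV[R]_d -> nat -> R,
          uvp_instance T eps x A /\ concave_assump T x A /\
          expected_value P T B x A alg < alpha * opt_value T x A.
Proof.
move=> eps0 T0 TB k.
set q := (B %/ T)%N.
have kE : k = (5 * q + 3).+2 by rewrite /k /q; lia.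
pose ie := eps^-1; pose r := ie / (2 * T%:R).
pose x := xx k.+1 ie r.
have ie0 : 0 < ie by rewrite invr_gt0.
have rle : 0 <= r <= ie by exact: r_le.
have r0 : 0 < r by exact: r_pos.
have xinj : injective x by exact: x_inj.
have dx : forall i j, dist2 (x i) (x j) = `|posn ie r i - posn ie r j| by move=> i j; exact: dist_x.
have dr : forall i j : 'I_k.+1, i != j -> r <= dist2 (x i) (x j).
  by move=> i j ij; rewrite dx; apply: posn_r.
have i1 : nat_of_ord (inord 1 : 'I_k.+1) = 1%N by rewrite inordK // kE.
have i0 : nat_of_ord (inord 0 : 'I_k.+1) = 0%N by rewrite inordK.
exists 1%N, k.+1, x, r.
split; first exact: xinj.
split.
  split.
    exists ([set~ (inord 1 : 'I_k.+1)])%SET; split; first by rewrite cardsC1 card_ord.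
    split.
      move=> i; case: (eqVneq i (inord 1)) => [->|ne].
        exists (inord 0).
          by rewrite !inE; apply/eqP => /(congr1 (@nat_of_ord _)); rewrite i0 i1.
        by rewrite dx /posn i0 i1 /= subr0 ger0_norm //; apply: ltW.
      exists i; first by rewrite !inE.
      by rewrite /dist2 subrr /l2norm big1 ?sqrtr0 ?ltW // => m _; rewrite mxE expr0n.
    exists (inord 1) => c; rewrite !inE => cne.
    by apply: dr; rewrite eq_sym.
  move=> C rho HC [Hcov _].
  have : ~~ ([set: 'I_k.+1]%SET \subset C).
    apply/negP => /subset_leq_card; rewrite cardsT card_ord HC; lia.
  case/subsetPn => p _ pC.
  have [c cC Hc] := Hcov p.
  apply: le_trans Hc; apply: dr.
  by apply/eqP => E; move: pC; rewrite E cC.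
split; first exact: r0.
move=> dd Omega P alg Hmeas alpha Ha.
pose E (j : 'I_k.+1) : set Omega :=
  if (2 <= j)%N then [set w | alg_output T B x (Aj T x j) (alg w) = j] else set0.
have mE : forall j, measurable (E j).
  move=> j; rewrite /E; case: ifP => j2; last exact: measurable0.
  by have [[H1 H2] H3] := @Aj_valid R eps T k.+1 eps0 T0 j j2; apply: Hmeas.
have Hsum : \sum_(j < k.+1) fine (P (E j)) <= (q + 1)%:R.
  apply: sum_prob_le => //.
  move=> w.
  pose hb := run T x (Abase T) (alg w) B [::].
  pose ob := st_output (alg w) hb.
  have key : forall j, (\1_(E j) w : R) <= ((T <= level hb j) + (ob == j))%:R.
    move=> j; rewrite indicE.
    case: (boolP (w \in E j)) => wE; last by rewrite ler0n.
    case: (leqP T (level hb j)) => lT; first by rewrite ler_nat.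
    move: wE; rewrite /E inE; case: ifP => j2; last by [].
    rewrite /= /alg_output.
    have Hag : forall i b, (i != j) || (b < T)%N -> Abase T (x i) b = Aj T x j (x i) b.
      move=> i b; rewrite /Abase (@Aj_x R eps T k.+1 eps0 T0).
      case: ifP => [/eqP ij|ij] //=; subst i.
      move=> bT; exact: (@f01 R eps T eps0 T0).
    rewrite -(@run_agree R 1 k.+1 T x (Abase T) (Aj T x j) (alg w) j Hag B [::] lT) -/hb -/ob => ->.
    by rewrite eqxx addn1 ler1n.
  apply: le_trans (ler_sum _ (fun j _ => key j)) _.
  rewrite -natr_sum ler_nat big_split /= sum_eq1 leq_add2r.
  rewrite /q leq_divRL // mulnC.
  apply: (leq_trans (count_full R k.+1 T hb)).
  exact: (@run_size R 1 k.+1 T x (Abase T) (alg w) B [::]).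
have [j /andP[j2 pj]] : exists j : 'I_k.+1, (2 <= j)%N && (fine (P (E j)) < 2^-1).
  case: (boolP [exists j : 'I_k.+1, (2 <= j)%N && (fine (P (E j)) < 2^-1)]) => [/existsP //|].
  rewrite negb_exists => /forallP Hall; exfalso.
  have Hlow : forall j : 'I_k.+1, ((2 <= j : nat)%:R / 2 : R) <= fine (P (E j)).
    move=> j; have := Hall j; rewrite negb_and -leNgt.
    case: (2 <= j)%N => /=; first by rewrite mul1r.
    by rewrite mul0r fine_ge0 // measure_ge0.
  have := le_trans (ler_sum _ (fun j _ => Hlow j)) Hsum.
  rewrite -mulr_suml -natr_sum kE count2.
  rewrite -addn1 !natrD /=.
  have : 0 <= q%:R :> R by [].
  lra.
pose A := Aj T x j.
have [[HA1 HA2] HA3] := @Aj_valid R eps T k.+1 eps0 T0 j j2.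
exists A; split; first by split.
split; first exact: HA3.
pose O (i : 'I_k.+1) : set Omega := [set w | alg_output T B x A (alg w) = i].
have HO : \sum_(i < k.+1) fine (P (O i)) <= 1.
  apply: sum_prob_le => //; first by move=> i; apply: Hmeas.
  move=> w; under eq_bigr do rewrite indicE.
  rewrite (bigD1 (alg_output T B x A (alg w))) //= big1 ?addr0.
    by case: (_ \in _).
  move=> i ine; rewrite memNset //= => Ei; move: ine; rewrite -Ei.
  by move/negP; apply; apply/eqP.
have pjE : fine (P (O j)) = fine (P (E j)) by rewrite /E j2.
pose c : R := T%:R^-1.
have Tp : 0 < T%:R :> R by rewrite ltr0n.
have c0 : 0 < c by rewrite invr_gt0.
have cT : c * T%:R = 1 by rewrite mulVf // lt0r_neq0.
have T1 : 1 <= T%:R :> R by rewrite ler1n.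
have Hval : forall i, A (x i) T = (1 - c) + (i == j)%:R * c.
  move=> i; rewrite /A (@Aj_x R eps T k.+1 eps0 T0); case: eqP => _ /=.
    by rewrite /f1 divff ?lt0r_neq0 // mul1r subrK.
  rewrite /f0 mul0r addr0 (_ : minn T T.-1 = T.-1); last by lia.
  have TE : T%:R = T.-1%:R + 1 :> R by rewrite -{1}(prednK T0) -addn1 natrD.
  have Tn0 : T.-1%:R + 1 != 0 :> R by rewrite -TE lt0r_neq0.
  by rewrite /c TE; field.
have Hexp : expected_value P T B x A alg =
    (1 - c) * \sum_(i < k.+1) fine (P (O i)) + fine (P (O j)) * c.
  rewrite /expected_value; under eq_bigr do rewrite Hval mulrDr.
  rewrite big_split /= mulr_sumr; congr (_ + _).
    by apply: eq_bigr => i _; rewrite mulrC.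
  rewrite (bigD1 j) //= eqxx mul1r big1 ?addr0 // => i /negbTE ->.
  by rewrite mul0r mulr0.
have Hopt : 1 <= opt_value T x A.
  have := le_bigmax 0 (fun i : 'I_k.+1 => A (x i) T) j.
  by rewrite Hval eqxx mul1r subrK.
have er : eps * r = c / 2.
  by rewrite /r /ie (@eps_r R eps T eps0) invfM mulrC.
have S0 : 0 <= \sum_(i < k.+1) fine (P (O i)).
  by apply: sumr_ge0 => i _; rewrite fine_ge0 // measure_ge0.
have pj0 : 0 <= fine (P (O j)) by rewrite fine_ge0 // measure_ge0.
rewrite Hexp; rewrite pjE in pj0 *.
have c1 : c <= 1.
  by rewrite /c invf_le1.
have a0 : 0 < alpha by move: Ha; rewrite er; lra.
apply: (@lt_le_trans _ _ alpha); last first.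
  by rewrite -[leLHS]mulr1 ler_wpM2l // ltW.
move: Ha; rewrite er => Ha.
nra.
Qed.
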